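(* Let $0<\alpha<\beta<1$ and $\tau=\min(\alpha,1-\beta)$. Let $p^1,\dots,p^m\in[\alpha,\beta]$ and let $v^1,\dots,v^m$ be independent with $v^j\sim D_{p^j}$, where $D_{p}$ denotes a distribution with $\Pr_{v\sim D_p}[v=0]=p$. Set $c^j=1$ if $v^j\neq0$ and $c^j=-1$ if $v^j=0$. Let $a^1,\dots,a^m\in[-1,1]$ be fixed. Then for all $\lambda\ge0$, $$\Pr\left[\sum_{j\in[m]}a^j\phi^{p^j}(c^j)\ge\lambda\right]\le e^{-\lambda^2/4m}+e^{-\sqrt\tau\lambda/4}.$$
   Context: For $p\in(0,1)$, $\phi^p:\{\pm1\}\to\mathbb{R}$ is defined by $\phi^p(1)=-\sqrt{\frac{p}{1-p}}$ and $\phi^p(-1)=\sqrt{\frac{1-p}{p}}$. *)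

(* Defs.v *)
From HB Require Import structures.
From mathcomp Require Import all_boot all_order all_algebra.
From mathcomp Require Import all_classical all_reals all_analysis.
Set Implicit Arguments. Unset Strict Implicit. Unset Printing Implicit Defensive.
Import Order.TTheory GRing.Theory Num.Theory.
Local Open Scope classical_set_scope.
Local Open Scope ring_scope.

(* phi^p : {+1,-1} -> R ; the argument x is meant to be 1 or -1 *)
Definition phi {R : realType} (p : R) (x : R) : R :=
  if x == 1 then - Num.sqrt (p / (1 - p)) else Num.sqrt ((1 - p) / p).

Definition csign {R : realType} (v : R) : R := if v != 0 then 1 else -1.

(* mutual independence of a finite family of real random variables:
   product rule for every family of measurable sets (taking B j = setT
   recovers every subfamily) *)
Definition mutually_independent {d} {T : measurableType d} {R : realType}
  (P : probability T R) (m : nat) (v : 'I_m -> T -> R) : Prop :=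
  forall B : 'I_m -> set R, (forall j, measurable (B j)) ->
    P (\bigcap_(j in [set: 'I_m]) (v j @^-1` B j)) =
    (\prod_(j < m) P (v j @^-1` B j))%E.

(* Main.v *)
Require Import Defs.
From HB Require Import structures.
From mathcomp Require Import all_boot all_order all_algebra.
From mathcomp Require Import all_classical all_reals all_analysis.
From mathcomp Require Import ring lra.
Import Order.TTheory GRing.Theory Num.Theory.
Local Open Scope classical_set_scope.
Local Open Scope ring_scope.
Lemma expR_mulN {R : realType} (y : R) : expR y * (1 - y) <= 1.
Proof.
have h := expR_ge1Dx (- y).
have e : expR y * expR (- y) = 1 by rewrite -expRD subrr expR0.
have := expR_gt0 y.
nra.
Qed.
Lemma exp_quad {R : realType} (x : R) : `|x| <= 1/2 -> expR x <= 1 + x + x ^+ 2.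
Proof.
move=> hx.
have [x0|x0] := lerP x 0.
  have h := expR_mulN x.
  have hx' : - 1/2 <= x by move: hx; rewrite ler_norml => /andP[]; lra.
  have hp : 0 < 1 - x by lra.
  rewrite -(ler_pM2r hp).
  apply: (le_trans h).
  nra.
have hx' : x <= 1/2 by move: hx; rewrite ler_norml => /andP[].
set y := x / 4.
have -> : x = 4%:R * y by rewrite /y; field.
rewrite expRM_natl.
have h := expR_mulN y.
have ey := expR_gt0 y.
have y0 : 0 < y by rewrite /y; lra.
have y1 : y <= 1/8 by rewrite /y; lra.
have q0 : 0 < 1 - y by lra.
have h4 : (expR y * (1 - y)) ^+ 4 <= 1.
  apply: exprn_ile1 => //; nra.
have hp : 0 < (1 - y) ^+ 4 by apply: exprn_gt0.
rewrite -(ler_pM2r hp).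
rewrite exprMn in h4.
apply: (le_trans h4).
have hy2 : 0 <= y ^+ 2 by apply: sqr_ge0.
have key : (1 + 4%:R * y + (4%:R * y) ^+ 2) * (1 - y) ^+ 4 - 1 =
   y^+2 * ((6%:R - 44%:R * y) + y ^+ 2 * (81%:R - 60%:R * y) + 16%:R * y ^+ 4) by ring.
rewrite -subr_ge0 key.
apply: mulr_ge0 => //.
have : 0 <= y ^+ 2 * (81%:R - 60%:R * y) by apply: mulr_ge0 => //; lra.
have : 0 <= y ^+ 4 by apply: exprn_ge0; lra.
lra.
Qed.
Lemma chernoff_comb {R : realType} (m : nat) (q x : 'I_m -> bool -> R) (t lam : R) :
  (forall j b, 0 <= q j b) -> 0 <= t ->
  \sum_(s : {ffun 'I_m -> bool} | lam <= \sum_(j < m) x j (s j)) \prod_(j < m) q j (s j)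
  <= expR (- (t * lam)) * \prod_(j < m) (\sum_(b : bool) q j b * expR (t * x j b)).
Proof.
move=> q0 t0.
rewrite bigA_distr_bigA /= big_distrr /= big_mkcond /=.
apply: ler_sum => s _.
have e : expR (- (t * lam)) * \prod_(j < m) (q j (s j) * expR (t * x j (s j))) =
   \prod_(j < m) q j (s j) * expR (t * (\sum_(j < m) x j (s j) - lam)).
  rewrite big_split /= mulrCA; congr (_ * _).
  rewrite -expR_sum -expRD; congr expR.
  by rewrite mulrBr big_distrr /= addrC.
have qp : 0 <= \prod_(j < m) q j (s j) by apply: prodr_ge0 => j _.
rewrite e; case: ifP => h.
  rewrite ler_peMr //; apply: le_trans (expR_ge1Dx _).
  rewrite lerDl; apply: mulr_ge0 => //; rewrite subr_ge0.
  exact: h.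
by apply: mulr_ge0 => //; apply: expR_ge0.
Qed.
Lemma choose_t {R : realType} (m : nat) (tau lam : R) : 0 < tau -> 0 <= lam ->
  exists t, [/\ 0 <= t, 4 * t ^+ 2 <= tau &
   expR (- (t * lam)) * expR (t ^+ 2) ^+ m <=
     expR (- (lam ^+ 2) / (4 * m%:R)) + expR (- (Num.sqrt tau * lam) / 4)].
Proof.
move=> tau0 lam0.
set s := Num.sqrt tau.
have s0 : 0 < s by rewrite /s sqrtr_gt0.
have s2 : s ^+ 2 = tau by rewrite /s sqr_sqrtr // ltW.
have e2 := expR_ge0 (- (s * lam) / 4).
have e1 := expR_ge0 (- (lam ^+ 2) / (4 * m%:R)).
move: e1; case: m => [|n] e1.
  exists 0; split => //.
    by rewrite expr0n /= mulr0 ltW.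
  rewrite mul0r oppr0 expR0 expr0 mulr1 mulr0 invr0 mulr0 expR0.
  by rewrite lerDl.
set M := n.+1%:R.
have M0 : 0 < M by rewrite /M ltr0n.
have [h|h] := lerP (lam / (2 * M)) (s / 2).
  exists (lam / (2 * M)); split.
  - by apply: divr_ge0 => //; apply: mulr_ge0 => //; apply: ltW.
  - rewrite -s2.
    have : 0 <= lam / (2 * M) by apply: divr_ge0 => //; apply: mulr_ge0 => //; apply: ltW.
    move: h; set u := lam / (2 * M) => h hu.
    nra.
  - rewrite -expRM_natl -expRD.
    have -> : - (lam / (2 * M) * lam) + M * (lam / (2 * M)) ^+ 2 = - lam ^+ 2 / (4 * M).
      by field; apply/eqP; lra.
    by rewrite lerDl.
exists (s / 2); split.
- by apply: divr_ge0 => //; apply: ltW.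
- by rewrite -s2; lra.
- rewrite -expRM_natl -expRD.
  apply: (@le_trans _ _ (expR (- (s * lam) / 4))); last by rewrite lerDr.
  rewrite ler_expR.
  have hl : M * s <= lam.
    move: h; rewrite ltr_pdivlMr; last by lra.
    nra.
  have : M * s * s <= lam * s by nra.
  nra.
Qed.
Lemma factor_bound {R : realType} (p a t : R) : 0 < p -> p < 1 -> -1 <= a -> a <= 1 ->
  0 <= t -> 4 * t ^+ 2 * (1 - p) <= p -> 4 * t ^+ 2 * p <= 1 - p ->
  p * expR (t * (a * phi p (-1))) + (1 - p) * expR (t * (a * phi p 1)) <= expR (t ^+ 2).
Proof.
move=> p0 p1 a0 a1 t0 hu hw.
have hn : ((-1 : R) == 1) = false by apply/negbTE/eqP; lra.
rewrite /phi hn eqxx.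
set u := Num.sqrt ((1 - p) / p).
set w := Num.sqrt (p / (1 - p)).
have q0 : 0 < 1 - p by lra.
have u0 : 0 <= u by apply: sqrtr_ge0.
have w0 : 0 <= w by apply: sqrtr_ge0.
have u2 : u ^+ 2 = (1 - p) / p by rewrite sqr_sqrtr // divr_ge0 // ltW.
have w2 : w ^+ 2 = p / (1 - p) by rewrite sqr_sqrtr // divr_ge0 // ltW.
have uw : u * w = 1.
  rewrite /u /w -sqrtrM; last by rewrite divr_ge0 // ltW.
  have -> : (1 - p) / p * (p / (1 - p)) = 1 by field; apply/andP; split; apply/eqP; lra.
  exact: sqrtr1.
have pu2 : p * u ^+ 2 = 1 - p by rewrite u2; field; apply/eqP; lra.
have qw2 : (1 - p) * w ^+ 2 = p by rewrite w2; field; apply/eqP; lra.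
have pu : p * u = (1 - p) * w.
  have -> : p * u = p * u ^+ 2 * w by rewrite expr2 -!mulrA uw mulr1.
  by rewrite pu2.
have tu : t * u <= 1/2.
  have e : (t * u) ^+ 2 * p = t ^+ 2 * (1 - p) by rewrite exprMn -pu2; ring.
  have tu0 : 0 <= t * u by apply: mulr_ge0.
  nra.
have tw : t * w <= 1/2.
  have e : (t * w) ^+ 2 * (1 - p) = t ^+ 2 * p by rewrite exprMn -[in RHS]qw2; ring.
  have tw0 : 0 <= t * w by apply: mulr_ge0.
  nra.
have tu0 : 0 <= t * u by apply: mulr_ge0.
have tw0 : 0 <= t * w by apply: mulr_ge0.
have e1 := @exp_quad R (t * (a * u)).
have e2 := @exp_quad R (t * (a * - w)).
have h1 : `|t * (a * u)| <= 1/2.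
  rewrite ler_norml; apply/andP; split; nra.
have h2 : `|t * (a * - w)| <= 1/2.
  rewrite ler_norml; apply/andP; split; nra.
have {}e1 := e1 h1. have {}e2 := e2 h2.
have s1 : p * expR (t * (a * u)) + (1 - p) * expR (t * (a * - w)) <=
   p * (1 + t * (a * u) + (t * (a * u)) ^+ 2) + (1 - p) * (1 + t * (a * - w) + (t * (a * - w)) ^+ 2).
  apply: lerD; apply: ler_wpM2l => //; lra.
apply: (le_trans s1).
have -> : p * (1 + t * (a * u) + (t * (a * u)) ^+ 2) + (1 - p) * (1 + t * (a * - w) + (t * (a * - w)) ^+ 2)
  = 1 + t * a * (p * u - (1 - p) * w) + t ^+ 2 * a ^+ 2 * (p * u ^+ 2 + (1 - p) * w ^+ 2) by ring.
rewrite pu pu2 qw2 subrr mulr0 addr0.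
have -> : 1 - p + p = 1 by ring.
rewrite mulr1.
apply: le_trans (expR_ge1Dx _).
have : a ^+ 2 <= 1 by nra.
have : 0 <= t ^+ 2 by apply: sqr_ge0.
nra.
Qed.
Lemma measure_fin_union {d} {T : measurableType d} {R : realType}
  (mu : {measure set T -> \bar R}) {I : finType} {G : pred I} {F : I -> set T} :
  (forall i, measurable (F i)) -> (forall i j, F i `&` F j !=set0 -> i = j) ->
  mu (\big[setU/set0]_(i | G i) F i) = (\sum_(i | G i) mu (F i))%E.
Proof.
move=> mF tF.
rewrite (_ : \big[setU/set0]_(i | G i) F i =
   \big[setU/set0]_(k < #|@predT I| | G (enum_val k)) F (enum_val k)); last first.
  exact (@big_enum_val_cond _ _ _ I predT G _).
rewrite (_ : (\sum_(i | G i) mu (F i))%E =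
   (\sum_(k < #|@predT I| | G (enum_val k)) mu (F (enum_val k)))%E); last first.
  exact (@big_enum_val_cond _ _ _ I predT G _).
rewrite measure_bigsetU_ord_cond //.
by move=> i j _ _ /tF /enum_val_inj.
Qed.

Theorem mainTheorem10 (R : realType) (alpha beta : R) (m : nat)
  (p a : 'I_m -> R) (d : measure_display) (T : measurableType d)
  (P : probability T R) (v : 'I_m -> T -> R) (lambda : R) :
  0 < alpha -> alpha < beta -> beta < 1 ->
  (forall j, alpha <= p j <= beta) ->
  (forall j, measurable_fun setT (v j)) ->
  mutually_independent P v ->
  (forall j, P (v j @^-1` [set 0]) = (p j)%:E) ->
  (forall j, -1 <= a j <= 1) ->
  0 <= lambda ->
  (P [set t | (lambda <= \sum_(j < m) a j * phi (p j) (csign (v j t)))%R]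
  <= (expR (- (lambda ^+ 2) / (4 * m%:R))
      + expR (- (Num.sqrt (Num.min alpha (1 - beta)) * lambda) / 4))%:E)%E.
Proof.
move=> a0 ab b1 hp hv hind hP ha lam0.
set tau := Num.min alpha (1 - beta).
have tau0 : 0 < tau by rewrite lt_min; apply/andP; split; lra.
have tau_a : tau <= alpha by rewrite /tau ge_min lexx.
have tau_b : tau <= 1 - beta by rewrite /tau ge_min lexx orbT.
pose B (s : {ffun 'I_m -> bool}) j : set R := if s j then [set 0] else ~` [set 0].
pose C s := \bigcap_(j in [set: 'I_m]) (v j @^-1` B s j).
pose sg t : {ffun 'I_m -> bool} := [ffun j => v j t == 0].
pose x j (b : bool) := a j * phi (p j) (if b then -1 else 1).
pose X (s : {ffun 'I_m -> bool}) := \sum_(j < m) x j (s j).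
pose q j (b : bool) := if b then p j else 1 - p j.
have Cchar : forall s t, C s t <-> s = sg t.
  move=> s t; split.
  - move=> h; apply/ffunP => j; rewrite ffunE.
    have := h j I; rewrite /B /=; case: (s j) => /=.
      by move=> ->; rewrite eqxx.
    by move=> hn; apply/esym/negbTE/eqP.
  - move=> -> j _; rewrite /B ffunE /=; by case: eqP.
have Sum_eq : forall t, \sum_(j < m) a j * phi (p j) (csign (v j t)) = X (sg t).
  move=> t; apply: eq_bigr => j _; rewrite /x ffunE /csign.
  by case: (v j t == 0).
have Seq : [set t | lambda <= \sum_(j < m) a j * phi (p j) (csign (v j t))] =
    \big[setU/set0]_(s | lambda <= X s) C s.
  rewrite -bigcup_seq_cond; apply/seteqP; split => t /=.
  - move=> h; exists (sg t); last exact/Cchar.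
    by rewrite /= mem_index_enum -Sum_eq.
  - by move=> [s /andP[_ hs] /Cchar es]; rewrite Sum_eq -es.
have mB : forall s j, measurable (B s j).
  move=> s j; rewrite /B; case: (s j); first exact: measurable_set1.
  by apply: measurableC; apply: measurable_set1.
have mvB : forall s j, measurable (v j @^-1` B s j).
  by move=> s j; have := hv j measurableT (B s j) (mB s j); rewrite setTI.
have mC : forall s, measurable (C s).
  move=> s; apply: fin_bigcap_measurable; first exact: finite_finset.
  by move=> j _; apply: mvB.
have PC : forall s, P (C s) = (\prod_(j < m) q j (s j))%:E.
  move=> s; rewrite (hind (B s) (mB s)) -prodEFin; apply: eq_bigr => j _.
  rewrite /B /q; case: (s j); first exact: hP.
  have m0 : measurable (v j @^-1` [set 0]).
    by have := hv j measurableT [set 0] (measurable_set1 0); rewrite setTI.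
  by rewrite -preimage_setC probability_setC // hP EFinB.
rewrite Seq (measure_fin_union P mC); last first.
  by move=> s1 s2 [t [/Cchar -> /Cchar ->]].
rewrite (eq_bigr _ (fun s _ => PC s)) sumEFin lee_fin.
have hq : forall j b, 0 <= q j b.
  by move=> j [] /=; have := hp j; move=> /andP[]; lra.
have [t [t0 t4 ht]] := @choose_t R m tau lambda tau0 lam0.
apply: le_trans (@chernoff_comb R m q x t lambda hq t0) _.
apply: le_trans ht.
apply: (ler_wpM2l (expR_ge0 _)).
have -> : expR (t ^+ 2) ^+ m = \prod_(j < m) expR (t ^+ 2) by rewrite prodr_const card_ord.
apply: ler_prod => j _; apply/andP; split.
  rewrite big_bool /=; have := hp j; move=> /andP[pa0 pb0]; apply: addr_ge0; apply: mulr_ge0; (try exact: expR_ge0); lra.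
rewrite big_bool /= /q /x /=.
have /andP[pa pb] := hp j.
have /andP[aa ab'] := ha j.
have t2 : 0 <= t ^+ 2 by apply: sqr_ge0.
apply: factor_bound => //; try lra; nra.
Qed.
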